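(* Let $\mathcal{P}$ and $\mathcal{N}$ be disjoint finite index sets (positives and negatives) with $|\mathcal{P}|\ge1$, with real logits $(s_i)_{i\in\mathcal{P}\cup\mathcal{N}}$ and, for $i\in\mathcal{P}$, values $\mathrm{IoU}_i\in[0,1]$, and fix $\delta\ge0$. The bucketed algorithm described in the context computes all Bucketed AP Loss gradients (respectively all Bucketed RS Loss gradients) $g_i$, $i\in\mathcal{P}\cup\mathcal{N}$, in time $\mathcal{O}\big(\max\big((|\mathcal{P}|+|\mathcal{N}|)\log(|\mathcal{P}|+|\mathcal{N}|),\,|\mathcal{P}|^2\big)\big)$.
   Context: Smoothed step function: $H(x)=0$ for $x<-\delta$, $H(x)=\frac{x}{2\delta}+\frac12$ for $-\delta\le x\le\delta$, $H(x)=1$ for $x>\delta$ (for $\delta=0$: $H(x)=1$ if $x>0$, $0$ if $x<0$). $x_{ij}=s_j-s_i$. Ratios with zero denominator are taken as $0$. Buckets: sort all logits decreasingly; the positives appear as $\hat s^+_1\ge\dots\ge\hat s^+_{|\mathcal{P}|}$; $B_1$ is the set of negatives above $\hat s^+_1$, $B_k$ the negatives between $\hat s^+_{k-1}$ and $\hat s^+_k$, $B_{|\mathcal{P}|+1}$ the negatives below $\hat s^+_{|\mathcal{P}|}$ (so there are at most $|\mathcal{P}|+1$ buckets); $b_k=|B_k|$; for nonempty $B_k$ the prototype logit $s^b_k$ is the mean logit of $B_k$ and $x^b_{ik}=s^b_k-s_i$. For $i\in\mathcal{P}$: $N^b_{FP}(i)=\sum_kH(x^b_{ik})b_k$, $\ell^b_R(i)=\frac{N^b_{FP}(i)}{\sum_{j\in\mathcal{P}}H(x_{ij})+N^b_{FP}(i)}$,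 $p(k^b|i)=b_kH(x^b_{ik})/N^b_{FP}(i)$; $\mathrm{rank}^+(i)=\sum_{j\in\mathcal{P}}H(x_{ij})$; sorting error $\ell_S(i)=\frac{1}{\mathrm{rank}^+(i)}\sum_{j\in\mathcal{P}}H(x_{ij})(1-\mathrm{IoU}_j)$; target sorting error $\ell^*_S(i)=\frac{\sum_{j\in\mathcal{P}}H(x_{ij})[\mathrm{IoU}_j\ge\mathrm{IoU}_i](1-\mathrm{IoU}_j)}{\sum_{j\in\mathcal{P}}H(x_{ij})[\mathrm{IoU}_j\ge\mathrm{IoU}_i]}$; sorting pmf $p_S(j|i)=\frac{H(x_{ij})[\mathrm{IoU}_j<\mathrm{IoU}_i]}{\sum_{k\in\mathcal{P}}H(x_{ik})[\mathrm{IoU}_k<\mathrm{IoU}_i]}$. Bucketed AP gradients: $g_i=-\frac{1}{|\mathcal{P}|}\ell^b_R(i)$ for $i\in\mathcal{P}$, and $g_i=\frac{1}{|\mathcal{P}|}\sum_{j\in\mathcal{P}}\ell^b_R(j)p(k^b|j)\frac{1}{b_k}$ for a negative $i\in B_k$. Bucketed RS gradients: same for negatives, and for $i\in\mathcal{P}$, $g_i=\frac{1}{|\mathcal{P}|}\big(-\ell^b_R(i)+\ell^*_S(i)-\ell_S(i)+\sum_{j\in\mathcal{P}}(\ell_S(j)-\ell^*_S(j))p_S(i|j)\big)$. The bucketed algorithm: (1) sort all logits; (2) form the buckets and prototype logits in one pass; (3) compute all $x^b_{ik}$, $i\in\mathcal{P}$, over prototypes; (4) compute $\ell^b_R(i)$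 for all $i\in\mathcal{P}$; (5) compute the primary terms $\ell^b_R(i)p(k^b|i)$ for all positive/prototype pairs; (6)–(8) (RS only) compute $\ell_S,\ell^*_S$ and the positive–positive terms $(\ell_S(i)-\ell^*_S(i))p_S(j|i)$; (9)–(10) sum primary terms to get the gradients of positives and of each prototype; (11) divide each prototype's gradient by $b_k$ and assign it to every negative of $B_k$; (12) normalize by $|\mathcal{P}|$. *)

(* Defs.v *)
From mathcomp Require Import all_boot all_order all_algebra.

Set Implicit Arguments.
Unset Strict Implicit.
Unset Printing Implicit Defensive.

Import Order.TTheory GRing.Theory Num.Theory.
Local Open Scope ring_scope.

(* Cost monad: a value together with the number of unit-cost steps.   *)
Definition C (A : Type) := (A * nat)%type.
Definition retC {A} (a : A) : C A := (a, 0%N).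
Definition step {A} (a : A) : C A := (a, 1%N).
(* an operation charged k unit steps (used for O(k) list splitting) *)
Definition costed {A} (k : nat) (a : A) : C A := (a, k).
Definition bindC {A B} (m : C A) (f : A -> C B) : C B :=
  let '(a, c) := m in let '(b, d) := f a in (b, (c + d)%N).

Fixpoint foldM {A B} (f : A -> B -> C A) (a : A) (s : seq B) : C A :=
  match s with
  | [::] => retC a
  | x :: s' => bindC (f a x) (fun a' => foldM f a' s')
  end.

Definition mapM {A B} (f : A -> C B) (s : seq A) : C (seq B) :=
  foldr (fun x acc => bindC (f x) (fun y => bindC acc (fun ys => retC (y :: ys))))
        (retC [::]) s.

(* arrays are modelled as functions nat -> A with O(1) read / write *)
Definition upd {A} (arr : nat -> A) (i : nat) (v : A) : nat -> A :=
  fun t => if t == i then v else arr t.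

Definition tabulate {A} (n : nat) (f : nat -> C A) (dflt : A) : C (nat -> A) :=
  foldM (fun arr i => bindC (f i) (fun v => step (upd arr i v)))
        (fun _ => dflt) (iota 0 n).

Section MergeSort.
Variables (T : Type) (le : T -> T -> bool).

Fixpoint mergeM (s1 : seq T) : seq T -> C (seq T) :=
  match s1 with
  | [::] => fun s2 => retC s2
  | x :: s1' =>
    fix mg (s2 : seq T) : C (seq T) :=
      match s2 with
      | [::] => retC s1
      | y :: s2' =>
        if le x y then bindC (mergeM s1' s2) (fun r => step (x :: r))
        else bindC (mg s2') (fun r => step (y :: r))
      end
  end.

Fixpoint msortF (fuel : nat) (s : seq T) : C (seq T) :=
  match fuel with
  | 0%N => retC s
  | f.+1 =>
    match s with
    | [::] => retC s
    | [:: _] => retC s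
    | _ =>
      let h := (size s)./2 in
      bindC (costed (size s) (take h s, drop h s)) (fun p =>
      bindC (msortF f p.1) (fun r1 =>
      bindC (msortF f p.2) (fun r2 => mergeM r1 r2)))
    end
  end.

Definition msortM (s : seq T) : C (seq T) := msortF (size s) s.
End MergeSort.

Section Bucketed.
Variable R : realFieldType.

(* Smoothed step function.  MathComp's x / 0 = 0 implements the       *)
(* "zero denominator => 0" rule; for delta = 0 this gives H 0 = 1/2.  *)
Definition Hstep (delta x : R) : R :=
  if x < - delta then 0 else if delta < x then 1 else x / (2 * delta) + 1 / 2.

(* Mathematical specification.  Positives are indexed by 0..np-1 with *)
(* logits sp and IoUs iou; negatives by 0..nn-1 with logits sn.       *)
Section Spec.
Variables (delta : R) (np nn : nat) (sp sn iou : nat -> R).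

Local Notation H := (Hstep delta).
Definition xpp (i j : nat) : R := sp j - sp i.

(* 0-based bucket index of negative j: the number of positives whose
   logit is strictly larger (ties: the negative is placed above). *)
Definition bucket_of (j : nat) : nat := (\sum_(i < np) nat_of_bool (sn j < sp i)%R)%N.
Definition bsize (k : nat) : nat := (\sum_(j < nn) nat_of_bool (bucket_of j == k))%N.
Definition proto (k : nat) : R :=
  (\sum_(j < nn | bucket_of j == k) sn j) / (bsize k)%:R.

Definition NFPb (i : nat) : R :=
  \sum_(k < np.+1) Hstep delta (proto k - sp i) * (bsize k)%:R.
Definition lRb (i : nat) : R :=
  NFPb i / (\sum_(j < np) H (xpp i j) + NFPb i).
Definition pkb (k i : nat) : R := (bsize k)%:R * H (proto k - sp i) / NFPb i.

Definition rankp (i : nat) : R := \sum_(j < np) H (xpp i j).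
Definition lS (i : nat) : R :=
  (\sum_(j < np) H (xpp i j) * (1 - iou j)) / rankp i.
Definition lSstar (i : nat) : R :=
  (\sum_(j < np) H (xpp i j) * (nat_of_bool (iou i <= iou j)%R)%:R * (1 - iou j))
  / (\sum_(j < np) H (xpp i j) * (nat_of_bool (iou i <= iou j)%R)%:R).
Definition pS (j i : nat) : R :=
  H (xpp i j) * (nat_of_bool (iou j < iou i)%R)%:R
  / (\sum_(k < np) H (xpp i k) * (nat_of_bool (iou k < iou i)%R)%:R).

Definition gAP_pos (i : nat) : R := - (np%:R)^-1 * lRb i.
Definition gRS_pos (i : nat) : R :=
  (np%:R)^-1 * (- lRb i + lSstar i - lS i
                + \sum_(j < np) (lS j - lSstar j) * pS i j).
Definition g_neg (j : nat) : R :=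
  (np%:R)^-1 * \sum_(i < np)
     lRb i * pkb (bucket_of j) i * ((bsize (bucket_of j))%:R)^-1.
End Spec.

Definition item := (R * bool * nat)%type. (* logit, is_positive, index *)

(* decreasing order; on equal logits negatives come first *)
Definition before (a b : item) : bool :=
  let '(va, pa, _) := a in let '(vb, pb, _) := b in
  (vb < va) || ((va == vb) && (pa ==> pb)).

Record bstate := BState {
  bs_k : nat;             (* current bucket index *)
  bs_cnt : nat;           (* number of negatives in current bucket *)
  bs_sum : R;             (* sum of their logits *)
  bs_size : nat -> nat;
  bs_proto : nat -> R;
  bs_of : nat -> nat      (* array: negative index -> bucket index *)
}.

Definition close_bucket (st : bstate) : bstate :=
  BState (bs_k st).+1 0 0
         (upd (bs_size st) (bs_k st) (bs_cnt st))
         (upd (bs_proto st) (bs_k st) (bs_sum st / (bs_cnt st)%:R))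
         (bs_of st).

Definition pass_item (st : bstate) (it : item) : C bstate :=
  let '(v, p, j) := it in
  if p then step (close_bucket st)
  else step (BState (bs_k st) (bs_cnt st).+1 (bs_sum st + v)
                    (bs_size st) (bs_proto st) (upd (bs_of st) j (bs_k st))).

Definition init_bstate : bstate :=
  BState 0 0 0 (fun _ => 0%N) (fun _ => 0) (fun _ => 0%N).

Definition sumM (n : nat) (f : nat -> R) : C R :=
  foldM (fun acc j => step (acc + f j)) 0 (iota 0 n).

Definition bucketed (rs : bool) (delta : R) (np nn : nat)
    (sp sn iou : nat -> R) : C ((nat -> R) * (nat -> R)) :=
  let H := Hstep delta in
  bindC (mapM (fun i => step ((sp i, true, i) : item)) (iota 0 np)) (fun lp =>
  bindC (mapM (fun j => step ((sn j, false, j) : item)) (iota 0 nn)) (fun ln =>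
  bindC (costed (size lp) (lp ++ ln)) (fun all =>
  bindC (msortM before all) (fun sorted =>
  bindC (foldM pass_item init_bstate sorted) (fun st0 =>
  bindC (step (close_bucket st0)) (fun st =>
  let sz := bs_size st in let pr := bs_proto st in let bof := bs_of st in
  bindC (tabulate np (fun i =>
           sumM np.+1 (fun k => H (pr k - sp i) * (sz k)%:R)) 0) (fun nfp =>
  bindC (tabulate np (fun i =>
           bindC (sumM np (fun j => H (sp j - sp i))) (fun rp =>
           step (nfp i / (rp + nfp i)))) 0) (fun lR =>
  bindC (tabulate np (fun i =>
           tabulate np.+1 (fun k =>
             step (lR i * ((sz k)%:R * H (pr k - sp i) / nfp i))) 0)
         (fun _ => 0)) (fun prim =>
  bindC (if rs then
           bindC (tabulate np (fun i =>
                    bindC (sumM np (fun j => H (sp j - sp i) * (1 - iou j))) (fun num =>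
                    bindC (sumM np (fun j => H (sp j - sp i))) (fun den =>
                    step (num / den)))) 0) (fun lSa =>
           bindC (tabulate np (fun i =>
                    bindC (sumM np (fun j => H (sp j - sp i)
                              * (nat_of_bool (iou i <= iou j)%R)%:R * (1 - iou j))) (fun num =>
                    bindC (sumM np (fun j => H (sp j - sp i)
                              * (nat_of_bool (iou i <= iou j)%R)%:R)) (fun den =>
                    step (num / den)))) 0) (fun lSs =>
           bindC (tabulate np (fun i =>
                    sumM np (fun k => H (sp k - sp i) * (nat_of_bool (iou k < iou i)%R)%:R)) 0)
                 (fun dS =>
           tabulate np (fun i =>
             bindC (sumM np (fun j => (lSa j - lSs j)
                       * (H (sp i - sp j) * (nat_of_bool (iou i < iou j)%R)%:R / dS j))) (fun pp =>
             step (- lR i + lSs i - lSa i + pp))) 0)))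
         else tabulate np (fun i => step (- lR i)) 0) (fun gpos_raw =>
  bindC (tabulate np.+1 (fun k => sumM np (fun i => prim i k)) 0) (fun gproto =>
  bindC (tabulate nn (fun j => step (gproto (bof j) / (sz (bof j))%:R)) 0)
        (fun gneg_raw =>
  bindC (tabulate np (fun i => step (gpos_raw i / np%:R)) 0) (fun gpos =>
  bindC (tabulate nn (fun j => step (gneg_raw j / np%:R)) 0) (fun gneg =>
  retC (gpos, gneg))))))))))))))).

End Bucketed.

(* Main.v *)
Require Import Defs.
From mathcomp Require Import all_boot all_order all_algebra.
From mathcomp Require Import zify ring lra.
Import Order.TTheory GRing.Theory Num.Theory.
Local Open Scope ring_scope.
Set Implicit Arguments.
Unset Strict Implicit.
Unset Printing Implicit Defensive.

Definition sat {A} (m : C A) (Q : A -> Prop) (c : nat) := Q m.1 /\ (m.2 <= c)%N.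

Lemma sat_bind A B (m : C A) (f : A -> C B) Q1 Q c1 c2 :
  sat m Q1 c1 -> (forall a, Q1 a -> sat (f a) Q c2) -> sat (bindC m f) Q (c1 + c2).
Proof.
case: m => a ca [/= Qa Hc] H; have [] := H a Qa.
rewrite /bindC; case: (f a) => b cb /= Qb Hd; split => //; exact: leq_add.
Qed.

Lemma sat_conseq A (m : C A) (Q1 Q2 : A -> Prop) c c' :
  sat m Q1 c -> (forall a, Q1 a -> Q2 a) -> (c <= c')%N -> sat m Q2 c'.
Proof. by case=> H1 H2 H H'; split; [apply: H | exact: leq_trans H']. Qed.

Lemma sat_ret A (a : A) (Q : A -> Prop) c : Q a -> sat (retC a) Q c.
Proof. by []. Qed.

Lemma sat_step A (a : A) (Q : A -> Prop) c : Q a -> (1 <= c)%N -> sat (step a) Q c.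
Proof. by []. Qed.

Lemma sat_costed A k (a : A) (Q : A -> Prop) c : Q a -> (k <= c)%N -> sat (costed k a) Q c.
Proof. by []. Qed.

Lemma mapM_step A B (g : A -> B) l : mapM (fun x => step (g x)) l = (map g l, size l).
Proof.
elim: l => // x l IH.
change (mapM (fun x => step (g x)) (x :: l)) with
  (bindC (step (g x)) (fun y => bindC (mapM (fun x => step (g x)) l) (fun ys => retC (y :: ys)))).
by rewrite IH /= addn0.
Qed.

Lemma sat_mapM A B (g : A -> B) l : sat (mapM (fun x => step (g x)) l) (eq^~ (map g l)) (size l).
Proof. by rewrite mapM_step. Qed.

Lemma foldM_sum (R : realFieldType) (f : nat -> R) a l :
  foldM (fun acc j => step (acc + f j)) a l = (a + \sum_(j <- l) f j, size l).
Proof.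
elim: l a => [|x l IH] a /=; first by rewrite big_nil addr0.
by rewrite IH big_cons addrA.
Qed.

Lemma sat_sumM (R : realFieldType) n (f : nat -> R) (Q : R -> Prop) c :
  Q (\sum_(j < n) f j) -> (n <= c)%N -> sat (sumM n f) Q c.
Proof.
rewrite /sumM foldM_sum add0r size_iota => HQ Hc; split; last by [].
change (Q (\sum_(j <- iota 0 n) f j)).
suff -> : \sum_(j <- iota 0 n) f j = \sum_(j < n) f j by [].
by rewrite -(big_mkord xpredT) /index_iota subn0.
Qed.

Lemma sat_foldtab A (f : nat -> C A) (P : nat -> A -> Prop) c l arr0 :
  (forall i, i \in l -> sat (f i) (P i) c) ->
  sat (foldM (fun arr i => bindC (f i) (fun v => step (upd arr i v))) arr0 l)
      (fun arr => forall i, (i \in l -> P i (arr i)) /\ (i \notin l -> arr i = arr0 i))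
      (size l * c.+1).
Proof.
elim: l arr0 => [|x l IH] arr0 Hf /=.
  by split => // i; split.
rewrite mulSn.
apply: (sat_bind (Q1 := fun a => exists v, P x v /\ a = upd arr0 x v)).
  rewrite -[c.+1]addn1; apply: sat_bind (Hf x (mem_head _ _)) _ => v Pv.
  by apply: sat_step => //; exists v.
move=> _ [v [Pv ->]].
have Hl : forall i, i \in l -> sat (f i) (P i) c by move=> i il; apply: Hf; rewrite inE il orbT.
apply: sat_conseq (IH _ Hl) _ (leqnn _).
move=> arr H i; rewrite inE negb_or; have [H1 H2] := H i.
split.
  case/orP=> [/eqP ->|il]; last exact: H1.
  have [H1' H2'] := H x.
  case: (boolP (x \in l)) => xl; first exact: H1' xl.
  by rewrite H2' // /upd eqxx.
case/andP=> ix il; rewrite H2 // /upd.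
by rewrite (negbTE ix).
Qed.

Lemma sat_tabulate A n (f : nat -> C A) d (P : nat -> A -> Prop) c :
  (forall i, (i < n)%N -> sat (f i) (P i) c) ->
  sat (tabulate n f d) (fun arr => forall i, (i < n)%N -> P i (arr i)) (n * c.+1).
Proof.
move=> H; rewrite /tabulate.
have := @sat_foldtab A f P c (iota 0 n) (fun _ => d).
rewrite size_iota => H'; apply: sat_conseq (H' _) _ (leqnn _).
  by move=> i; rewrite mem_iota add0n => /andP [_ /H].
by move=> arr Ha i lti; apply: (Ha i).1; rewrite mem_iota add0n.
Qed.

Local Close Scope ring_scope.
Lemma mergeM_spec (T : Type) (le : T -> T -> bool) s1 s2 :
  (mergeM le s1 s2).1 = merge le s1 s2 /\ ((mergeM le s1 s2).2 <= size s1 + size s2)%N.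
Proof.
elim: s1 s2 => [|x s1 IH] s2; first by [].
elim: s2 => [|y s2 IH2]; first by rewrite /= addn0.
rewrite /=; case: (le x y).
  have [E1 E2] := IH (y :: s2).
  move: E1 E2; case: (mergeM le s1 (y :: s2)) => r c /= -> H; split => //.
  rewrite /= in H; lia.
move: IH2; rewrite /=.
case: (_ s2) => r c /= [-> H]; split => //; lia.
Qed.

Lemma up_log_half n : (1 < n)%N -> (up_log 2 (n - n./2) <= (up_log 2 n).-1)%N.
Proof.
move=> n1; apply: up_log_min => //.
have := up_logP n (isT : (1 < 2)%N).
have : (0 < up_log 2 n)%N by rewrite up_log_gt0 n1.
case: (up_log 2 n) => [|u] //= _; rewrite expnS => H.
have := leq_half_double n; rewrite -!divn2; lia.
Qed.

Lemma msortF_spec (T : eqType) (le : rel T) (tot : total le) f s :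
  (size s <= f)%N ->
  [/\ perm_eq (msortF le f s).1 s, sorted le (msortF le f s).1 &
     ((msortF le f s).2 <= 2 * size s * up_log 2 (size s))%N].
Proof.
elim: f s => [|f IH] s Hs.
  by case: s Hs => //.
case: s Hs => [|x [|y s']] Hs; try by split.
set s := x :: y :: s'.
have -> : msortF le f.+1 s = bindC (costed (size s) (take (size s)./2 s, drop (size s)./2 s))
  (fun p => bindC (msortF le f p.1) (fun r1 => bindC (msortF le f p.2) (fun r2 => mergeM le r1 r2))) by [].
have n2 : (1 < size s)%N by [].
have {}Hs : (size s <= f.+1)%N by [].
clearbody s.
have E : take (size s)./2 s ++ drop (size s)./2 s = s by rewrite cat_take_drop.
have Z1 : size (take (size s)./2 s) = (size s)./2 by rewrite size_take; case: ltnP => //; lia.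
have Z2 : size (drop (size s)./2 s) = size s - (size s)./2 by rewrite size_drop.
have hl := up_log_half n2.
have hl1 : (up_log 2 (size s)./2 <= (up_log 2 (size s)).-1)%N.
  apply: leq_trans hl; apply: leq_up_log; lia.
have ul : (0 < up_log 2 (size s))%N by rewrite up_log_gt0 n2.
move: E Z1 Z2 (IH (take (size s)./2 s)) (IH (drop (size s)./2 s)).
move: (take _ s) (drop _ s) => s1 s2 E Z1 Z2 I1 I2.
have [P1 S1 C1] := I1 ltac:(rewrite Z1 -divn2; lia).
have [P2 S2 C2] := I2 ltac:(rewrite Z2 -divn2; lia).
rewrite /=.
move: P1 S1 C1 P2 S2 C2; case: (msortF le f s1) => r1 c1; case: (msortF le f s2) => r2 c2 /=.
move=> P1 S1 C1 P2 S2 C2.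
have [M1 M2] := mergeM_spec le r1 r2.
move: M1 M2; case: (mergeM le r1 r2) => r c /= -> M2.
split.
- by rewrite perm_merge -E perm_cat.
- exact: merge_sorted.
- rewrite (perm_size P1) (perm_size P2) Z1 Z2 in M2.
  rewrite Z1 in C1; rewrite Z2 in C2.
  have H1 : (c1 <= 2 * (size s)./2 * (up_log 2 (size s)).-1)%N.
    apply: leq_trans C1 _; rewrite leq_mul2l; apply/orP; right; exact: hl1.
  have H2 : (c2 <= 2 * (size s - (size s)./2) * (up_log 2 (size s)).-1)%N.
    apply: leq_trans C2 _; rewrite leq_mul2l; apply/orP; right; exact: hl.
  have hn : ((size s)./2 <= size s)%N by rewrite -divn2 leq_div.
  move: H1 H2 M2 hn; case: (up_log 2 (size s)) ul => // v _ /=.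
  move: (size s) ((size s)./2) => n h; nia.
Qed.

Local Open Scope ring_scope.
Definition isp (R : realFieldType) (x : item R) : bool := x.1.2.
Definition negk (R : realFieldType) (b : nat -> nat) k (x : item R) := ~~ x.1.2 && (b x.2 == k).

Arguments isp {R}.
Arguments negk {R}.

Lemma count_iota_sum (P : pred nat) n : count P (iota 0 n) = (\sum_(j < n) nat_of_bool (P j))%N.
Proof.
rewrite -sum1_count big_mkcond /= -(big_mkord xpredT (fun j => nat_of_bool (P j))) /index_iota subn0.
by apply: eq_bigr => j _; case: (P j).
Qed.


Lemma bindCA A B D (m : C A) (f : A -> C B) (g : B -> C D) :
  bindC (bindC m f) g = bindC m (fun a => bindC (f a) g).
Proof.
rewrite /bindC; case: m => a c; case: (f a) => b d; case: (g b) => e k.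
by rewrite addnA.
Qed.

Lemma foldM_rcons A B (f : A -> B -> C A) a t x :
  foldM f a (rcons t x) = bindC (foldM f a t) (fun a' => f a' x).
Proof.
elim: t a => [|y t IH] a /=.
  by rewrite /bindC /retC; case: (f a x) => b d; rewrite addn0.
rewrite bindCA; rewrite {1 3}/bindC; case: (f a y) => a1 c1.
by rewrite IH.
Qed.

Section Pass.
Variable R : realFieldType.
Implicit Types (s t : seq (item R)) (x y : item R).


Record Inv (b : nat -> nat) t (st : bstate R) : Prop := {
  I_k : bs_k st = count isp t;
  I_cnt : bs_cnt st = count (negk b (count isp t)) t;
  I_sum : bs_sum st = \sum_(x <- t | negk b (count isp t) x) x.1.1;
  I_size : forall k, (k < count isp t)%N -> bs_size st k = count (negk b k) t;
  I_proto : forall k, (k < count isp t)%N ->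
     bs_proto st k = (\sum_(x <- t | negk b k x) x.1.1) / (count (negk b k) t)%:R;
  I_of : forall x, x \in t -> ~~ x.1.2 -> bs_of st x.2 = b x.2;
  I_le : forall x, x \in t -> ~~ x.1.2 -> (b x.2 <= count isp t)%N
}.

Lemma pass_spec (b : nat -> nat) s :
  (forall t1 x t2, s = t1 ++ x :: t2 -> ~~ x.1.2 -> b x.2 = count isp t1) ->
  (foldM (@pass_item R) (init_bstate R) s).2 = size s /\
  Inv b s (foldM (@pass_item R) (init_bstate R) s).1.
Proof.
elim/last_ind: s => [|t x IH] Hs.
  split => //; split => //=; by rewrite big_nil.
have Ht : forall t1 y t2, t = t1 ++ y :: t2 -> ~~ y.1.2 -> b y.2 = count isp t1.
  by move=> t1 y t2 E; apply: Hs; rewrite E rcons_cat.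
have Hx : ~~ x.1.2 -> b x.2 = count isp t.
  by apply: Hs; rewrite -cats1.
have [IHc IHi] := IH Ht.
clear IH Ht Hs.
rewrite foldM_rcons; move: IHc IHi; case: (foldM _ _ t) => st c /= -> Iv.
rewrite size_rcons.
case: x Hx => [[v p] j] /= Hx.
have cnt_r : forall (P : pred (item R)), count P (rcons t (v, p, j)) = (count P t + P (v, p, j))%N.
  by move=> P; rewrite -cats1 count_cat /= addn0.
have sum_r : forall (P : pred (item R)), \sum_(y <- rcons t (v, p, j) | P y) y.1.1 =
     \sum_(y <- t | P y) y.1.1 + (if P (v, p, j) then v else 0).
  by move=> P; rewrite big_rcons.
have mem_r : forall y, y \in rcons t (v, p, j) -> y = (v, p, j) \/ y \in t.
  by move=> y; rewrite mem_rcons inE => /orP [/eqP ->|]; [left|right].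
set K := count isp t.
have Kp : count isp (rcons t (v, p, j)) = (K + p)%N by rewrite cnt_r.
case: p Hx cnt_r sum_r mem_r Kp => Hx cnt_r sum_r mem_r Kp; rewrite /= addn1; split => //; split; rewrite ?Kp /=.
-
  by rewrite (I_k Iv) addn1.
- rewrite cnt_r /= addn0; apply/esym/eqP; rewrite -leqn0 leqNgt -has_count.
  apply/hasPn => y yt; rewrite /negk; apply/negP => /andP [ny /eqP bk].
  by have := I_le Iv yt ny; rewrite bk /K; lia.
- rewrite sum_r /= addr0 big1_seq // => y /andP [/andP [ny /eqP bk] yt].
  by have := I_le Iv yt ny; rewrite bk /K; lia.
- move=> k; rewrite addn1 ltnS (I_k Iv) cnt_r /= addn0 /upd => kK.
  case: eqP => [->|/eqP kK']; first by rewrite (I_cnt Iv).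
  by apply: (I_size Iv); rewrite ltn_neqAle kK' kK.
- move=> k; rewrite addn1 ltnS (I_k Iv) cnt_r sum_r /= addn0 addr0 /upd => kK.
  case: eqP => [->|/eqP kK']; first by rewrite (I_cnt Iv) (I_sum Iv).
  by apply: (I_proto Iv); rewrite ltn_neqAle kK' kK.
- move=> y /mem_r [-> //|yt] ny; exact: (I_of Iv).
- move=> y /mem_r [-> //|yt] ny; have := I_le Iv yt ny; rewrite /K; lia.
-
  by rewrite (I_k Iv) addn0.
- by rewrite addn0 (I_cnt Iv) cnt_r /negk /= (Hx isT) eqxx addn1.
- by rewrite addn0 (I_sum Iv) sum_r /negk /= (Hx isT) eqxx.
- move=> k; rewrite addn0 => kK; rewrite (I_size Iv) // cnt_r /negk /= (Hx isT).
  by move: kK; rewrite /K; case: eqP => [->|_]; rewrite ?ltnn // addn0.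
- move=> k; rewrite addn0 => kK; rewrite (I_proto Iv) // cnt_r sum_r /negk /= (Hx isT).
  by move: kK; rewrite /K; case: eqP => [->|_]; rewrite ?ltnn // addn0 addr0.
- move=> y /mem_r [-> _|yt ny]; first by rewrite /upd eqxx (I_k Iv) (Hx isT).
  rewrite /upd; case: eqP => [->|_]; last exact: (I_of Iv).
  by rewrite (I_k Iv) (Hx isT).
- move=> y /mem_r [-> _|yt ny]; first by rewrite (Hx isT) addn0.
  have := I_le Iv yt ny; rewrite /K; lia.
Qed.
End Pass.

Section Sort.
Variable R : realFieldType.

Lemma beforeE (va vb : R) pa pb ia ib :
  before (va, pa, ia) (vb, pb, ib) = (vb < va) || ((va == vb) && (pa ==> pb)).
Proof. by []. Qed.

Lemma before_trans : transitive (@before R).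
Proof.
move=> [[vb pb] ib] [[va pa] ia] [[vc pc] ic]; rewrite !beforeE.
case/orP=> [h1|/andP [/eqP e1 i1]]; case/orP=> [h2|/andP [/eqP e2 i2]].
- by rewrite (lt_trans h2 h1).
- by rewrite -e2 h1.
- by rewrite e1 h2.
- by rewrite e1 e2 eqxx /=; apply/orP; right; move: i1 i2; case: pa; case: pb; case: pc.
Qed.

Lemma before_total : total (@before R).
Proof.
move=> [[va pa] ia] [[vb pb] ib]; rewrite !beforeE.
case: (ltgtP va vb) => //= _.
by case: pa; case: pb.
Qed.

Variables (np nn : nat) (sp sn : nat -> R).
Definition lp : seq (item R) := map (fun i => (sp i, true, i)) (iota 0 np).
Definition ln : seq (item R) := map (fun j => (sn j, false, j)) (iota 0 nn).

Lemma count_lpln (P : pred (item R)) :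
  count P (lp ++ ln) = (count (fun i => P (sp i, true, i)) (iota 0 np) +
                        count (fun j => P (sn j, false, j)) (iota 0 nn))%N.
Proof. by rewrite count_cat !count_map. Qed.

Lemma Hs_sorted s : perm_eq s (lp ++ ln) -> sorted (@before R) s ->
  forall t1 x t2, s = t1 ++ x :: t2 -> ~~ x.1.2 ->
  bucket_of np sp sn x.2 = count (@isp R) t1.
Proof.
move=> Ps Ss t1 x t2 E nx.
have xs : x \in lp ++ ln by rewrite -(perm_mem Ps) E mem_cat mem_head orbT.
have [j jn xE] : exists2 j, (j < nn)%N & x = (sn j, false, j).
  move: xs; rewrite mem_cat => /orP [/mapP [i _ xE]|/mapP [j]]; first by rewrite xE in nx.
  by rewrite mem_iota add0n => /andP [_ jn] ->; exists j.
subst x => /=.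
have Pw : pairwise (@before R) s by rewrite -sorted_pairwise //; exact: before_trans.
move: Pw; rewrite E pairwise_cat pairwise_cons => /and3P [/allrelP A1 _ /andP [/allP A2 _]].
pose P := fun y : item R => isp y && (sn j < y.1.1).
have C1 : count P t1 = count (@isp R) t1.
  apply: eq_in_count => -[[vy py] iy] yt; rewrite /P /isp /=.
  case: py yt => //= yt; have := A1 _ _ yt (mem_head _ _).
  by rewrite beforeE andbF orbF.
have C2 : count P ((sn j, false, j) :: t2) = 0%N.
  apply/eqP; rewrite -leqn0 leqNgt -has_count; apply/hasPn => -[[vy py] iy].
  rewrite inE => /orP [/eqP -> //|yt]; rewrite /P /isp /=.
  case: py yt => //= yt; have := A2 _ yt; rewrite beforeE /= andbT => /orP [h|/eqP ->].
    by rewrite ltNge ltW.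
  by rewrite ltxx.
have := permP Ps P; rewrite E count_cat C1 C2 addn0 => ->.
rewrite count_lpln /P /isp /=.
rewrite count_pred0 addn0 /bucket_of count_iota_sum.
by apply: eq_bigr => i _.
Qed.
End Sort.

Section Final.
Variables (R : realFieldType) (np nn : nat) (sp sn : nat -> R).
Local Notation b := (bucket_of np sp sn).

Lemma bucket_le j : (b j <= np)%N.
Proof.
have -> : b j = count (fun i => sn j < sp i) (iota 0 np).
  by rewrite count_iota_sum /bucket_of.
by rewrite -{2}(size_iota 0 np) count_size.
Qed.

Lemma final_state s st : perm_eq s (lp np sp ++ ln nn sn) -> Inv b s st ->
  (forall k, (k < np.+1)%N -> bs_size (close_bucket st) k = bsize np nn sp sn k) /\
  (forall k, (k < np.+1)%N -> bs_proto (close_bucket st) k = proto np nn sp sn k) /\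
  (forall j, (j < nn)%N -> bs_of (close_bucket st) j = b j).
Proof.
move=> Ps Iv.
have Kc : count isp s = np.
  rewrite (permP Ps) count_lpln /isp /= (@eq_count _ _ predT) // count_predT size_iota.
  by rewrite (@eq_count _ _ pred0) // count_pred0 addn0.
have cntk : forall k, count (negk b k) s = bsize np nn sp sn k.
  move=> k; rewrite (permP Ps) count_lpln /negk /= (@eq_count _ _ pred0) // count_pred0 add0n.
  by rewrite count_iota_sum.
have sumk : forall k, \sum_(x <- s | negk b k x) x.1.1 = \sum_(j < nn | b j == k) sn j.
  move=> k; rewrite (perm_big _ Ps) big_cat !big_map /= big_pred0 // add0r.
  by rewrite -(big_mkord (fun j => b j == k) sn) /index_iota subn0.
have Ik := I_k Iv; rewrite Kc in Ik.
split; [|split].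
- move=> k; rewrite ltnS /= /upd Ik; case: eqP => [->|/eqP kn] kle.
    by rewrite (I_cnt Iv) Kc cntk.
  by rewrite (I_size Iv) ?Kc ?cntk // ltn_neqAle kn kle.
- move=> k; rewrite ltnS /= /upd Ik; case: eqP => [->|/eqP kn] kle.
    by rewrite (I_cnt Iv) (I_sum Iv) Kc cntk sumk.
  by rewrite (I_proto Iv) ?Kc ?cntk ?sumk // ltn_neqAle kn kle.
- move=> j jn /=.
  have xs : (sn j, false, j) \in s.
    by rewrite (perm_mem Ps) mem_cat; apply/orP; right; apply/mapP; exists j; rewrite // mem_iota.
  exact: (I_of Iv xs).
Qed.
End Final.

Definition CRS (np : nat) :=
  (np * (np + (np + 1)).+1 + (np * (np + (np + 1)).+1 + (np * np.+1 + np * (np + 1).+1)))%N.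

Definition total (np nn : nat) : nat :=
  (np + (nn + (np + (2 * (np + nn) * up_log 2 (np + nn) + ((np + nn) + (1 +
  (np * (np.+1).+1 + (np * (np + 1).+1 + (np * (np.+1 * 2).+1 + (CRS np +
  (np.+1 * np.+1 + (nn * 2 + (np * 2 + (nn * 2 + 0))))))))))))))%N.

Lemma main_sat (R : realFieldType) rs (delta : R) np nn sp sn iou :
  sat (bucketed rs delta np nn sp sn iou)
    (fun r => (forall i, (i < np)%N -> r.1 i = (if rs then gRS_pos delta np nn sp sn iou i
                    else gAP_pos delta np nn sp sn i)) /\
              (forall j, (j < nn)%N -> r.2 j = g_neg delta np nn sp sn j))
    (total np nn).
Proof.
rewrite /bucketed /total; cbv beta zeta.
apply: (sat_bind (Q1 := fun l => l = lp np sp)).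
  apply: sat_conseq (sat_mapM (fun i => (sp i, true, i) : item R) (iota 0 np)) _ _ => //.
  by rewrite size_iota.
move=> _ ->.
apply: (sat_bind (Q1 := fun l => l = ln nn sn)).
  apply: sat_conseq (sat_mapM (fun i => (sn i, false, i) : item R) (iota 0 nn)) _ _ => //.
  by rewrite size_iota.
move=> _ ->.
apply: (sat_bind (Q1 := fun l => l = lp np sp ++ ln nn sn)).
  by apply: sat_costed => //; rewrite size_map size_iota.
move=> _ ->.
apply: (sat_bind (Q1 := fun r => perm_eq r (lp np sp ++ ln nn sn) /\ sorted (@before R) r)).
  have [P1 S1 C1] := msortF_spec (@before_total R) (leqnn (size (lp np sp ++ ln nn sn))).
  split; first by split.
  by apply: leq_trans C1 _; rewrite size_cat !size_map !size_iota.
move=> sorted [Ps Ss].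
apply: (sat_bind (Q1 := fun st0 => Inv (bucket_of np sp sn) sorted st0)).
  have [C1 I1] := pass_spec (Hs_sorted Ps Ss).
  split => //; rewrite C1 (perm_size Ps) size_cat !size_map !size_iota //.
move=> st0 I0.
apply: (sat_bind (Q1 := fun st =>
  (forall k, (k < np.+1)%N -> bs_size st k = bsize np nn sp sn k) /\ (forall k, (k < np.+1)%N -> bs_proto st k = proto np nn sp sn k) /\ (forall j, (j < nn)%N -> bs_of st j = bucket_of np sp sn j))).
  by apply: sat_step => //; exact: final_state Ps I0.
move=> st [Fsz [Fpr Fof]]; cbv beta zeta.
apply: (sat_bind (Q1 := fun nfp => forall i, (i < np)%N -> nfp i = NFPb delta np nn sp sn i)).
  apply: (sat_conseq (@sat_tabulate _ _ _ _ (fun i v => v = NFPb delta np nn sp sn i) np.+1 _)); [ | by [] | by []].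
  move=> i _; apply: sat_sumM => //.
  by rewrite /NFPb; apply: eq_bigr => k _; rewrite Fsz ?Fpr.
move=> nfp Hnfp; cbv beta.
apply: (sat_bind (Q1 := fun lR => forall i, (i < np)%N -> lR i = lRb delta np nn sp sn i)).
  apply: (sat_conseq (@sat_tabulate _ _ _ _ (fun i v => v = lRb delta np nn sp sn i) (np + 1)%N _)); [ | by [] | by []].
  move=> i ip.
  apply: (sat_bind (Q1 := fun rp => rp = \sum_(j < np) Hstep delta (sp j - sp i))).
    exact: sat_sumM.
  by move=> _ ->; apply: sat_step => //; rewrite /lRb Hnfp.
move=> lR HlR; cbv beta.
apply: (sat_bind (Q1 := fun prim => forall i, (i < np)%N -> forall k, (k < np.+1)%N ->
          prim i k = lRb delta np nn sp sn i * pkb delta np nn sp sn k i)).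
  apply: (sat_conseq (@sat_tabulate _ _ _ _ (fun i arr => forall k, (k < np.+1)%N ->
          arr k = lRb delta np nn sp sn i * pkb delta np nn sp sn k i) (np.+1 * 2)%N _));
    [ | by [] | by []].
  move=> i ip.
  apply: (sat_conseq (@sat_tabulate _ _ _ _ (fun k v =>
          v = lRb delta np nn sp sn i * pkb delta np nn sp sn k i) 1%N _)); [ | by [] | by []].
  move=> k kp; apply: sat_step => //.
  by rewrite HlR // Fsz // Fpr // Hnfp // /pkb.
move=> prim Hprim; cbv beta.
apply: (sat_bind (Q1 := fun g => forall i, (i < np)%N -> g i =
   (if rs then - lRb delta np nn sp sn i + lSstar delta np sp iou i - lS delta np sp iou i
          + \sum_(j < np) (lS delta np sp iou j - lSstar delta np sp iou j) * pS delta np sp iou i j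
    else - lRb delta np nn sp sn i))).
  case: rs; last first.
    apply: (sat_conseq (@sat_tabulate _ _ _ _ (fun i v => v = - lRb delta np nn sp sn i) 1%N _)).
    - by move=> i ip; apply: sat_step => //; rewrite HlR.
    - by [].
    - rewrite /CRS; nia.
  rewrite /CRS.
  apply: (sat_bind (Q1 := fun lSa => forall i, (i < np)%N -> lSa i = lS delta np sp iou i)).
    apply: (sat_conseq (@sat_tabulate _ _ _ _ (fun i v => v = lS delta np sp iou i) (np + (np + 1))%N _)); [ | by [] | by []].
    move=> i ip.
    apply: (sat_bind (Q1 := fun num => num = \sum_(j < np) Hstep delta (sp j - sp i) * (1 - iou j))).
      exact: sat_sumM.
    move=> _ ->.
    apply: (sat_bind (Q1 := fun den => den = \sum_(j < np) Hstep delta (sp j - sp i))).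
      exact: sat_sumM.
    by move=> _ ->; apply: sat_step.
  move=> lSa HlSa; cbv beta.
  apply: (sat_bind (Q1 := fun lSs => forall i, (i < np)%N -> lSs i = lSstar delta np sp iou i)).
    apply: (sat_conseq (@sat_tabulate _ _ _ _ (fun i v => v = lSstar delta np sp iou i) (np + (np + 1))%N _)); [ | by [] | by []].
    move=> i ip.
    apply: (sat_bind (Q1 := fun num => num = \sum_(j < np) Hstep delta (sp j - sp i)
                  * (nat_of_bool (iou i <= iou j)%R)%:R * (1 - iou j))).
      exact: sat_sumM.
    move=> _ ->.
    apply: (sat_bind (Q1 := fun den => den = \sum_(j < np) Hstep delta (sp j - sp i)
                  * (nat_of_bool (iou i <= iou j)%R)%:R)).
      exact: sat_sumM.
    by move=> _ ->; apply: sat_step.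
  move=> lSs HlSs; cbv beta.
  apply: (sat_bind (Q1 := fun dS => forall i, (i < np)%N -> dS i =
      \sum_(k < np) Hstep delta (sp k - sp i) * (nat_of_bool (iou k < iou i)%R)%:R)).
    apply: (sat_conseq (@sat_tabulate _ _ _ _ (fun i v => v =
      \sum_(k < np) Hstep delta (sp k - sp i) * (nat_of_bool (iou k < iou i)%R)%:R) np _)); [ | by [] | by []].
    by move=> i ip; apply: sat_sumM.
  move=> dS HdS; cbv beta.
  apply: (sat_conseq (@sat_tabulate _ _ _ _ (fun i v => v =
     - lRb delta np nn sp sn i + lSstar delta np sp iou i - lS delta np sp iou i
          + \sum_(j < np) (lS delta np sp iou j - lSstar delta np sp iou j) * pS delta np sp iou i j)
     (np + 1)%N _)); [ | by [] | by []].
  move=> i ip.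
  apply: (sat_bind (Q1 := fun pp => pp = \sum_(j < np) (lS delta np sp iou j - lSstar delta np sp iou j) * pS delta np sp iou i j)).
    apply: sat_sumM => //.
    apply: eq_bigr => j _; rewrite HlSa // HlSs // HdS //.
  by move=> _ ->; apply: sat_step => //; rewrite HlR // HlSa // HlSs.
move=> graw Hgraw; cbv beta.
apply: (sat_bind (Q1 := fun gp => forall k, (k < np.+1)%N ->
      gp k = \sum_(i < np) lRb delta np nn sp sn i * pkb delta np nn sp sn k i)).
  apply: (sat_conseq (@sat_tabulate _ _ _ _ (fun k v => v =
      \sum_(i < np) lRb delta np nn sp sn i * pkb delta np nn sp sn k i) np _)); [ | by [] | by []].
  move=> k kp; apply: sat_sumM => //.
  by apply: eq_bigr => i _; rewrite Hprim.
move=> gp Hgp; cbv beta.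
apply: (sat_bind (Q1 := fun gn => forall j, (j < nn)%N -> gn j =
   (\sum_(i < np) lRb delta np nn sp sn i * pkb delta np nn sp sn (bucket_of np sp sn j) i)
     / (bsize np nn sp sn (bucket_of np sp sn j))%:R)).
  apply: (sat_conseq (@sat_tabulate _ _ _ _ (fun j v => v =
   (\sum_(i < np) lRb delta np nn sp sn i * pkb delta np nn sp sn (bucket_of np sp sn j) i)
     / (bsize np nn sp sn (bucket_of np sp sn j))%:R) 1%N _)); [ | by [] | by []].
  move=> j jn; apply: sat_step => //.
  by rewrite Fof // Hgp ?Fsz // ltnS bucket_le.
move=> gn Hgn; cbv beta.
apply: (sat_bind (Q1 := fun gpos => forall i, (i < np)%N -> gpos i =
      (if rs then gRS_pos delta np nn sp sn iou i else gAP_pos delta np nn sp sn i))).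
  apply: (sat_conseq (@sat_tabulate _ _ _ _ (fun i v => v =
      (if rs then gRS_pos delta np nn sp sn iou i else gAP_pos delta np nn sp sn i)) 1%N _)); [ | by [] | by []].
  move=> i ip; apply: sat_step => //.
  move: (Hgraw i ip); clear Hgraw; case: rs => ->.
    by rewrite /gRS_pos mulrC.
  by rewrite /gAP_pos mulrC mulrN mulNr.
move=> gpos Hgpos; cbv beta.
apply: (sat_bind (Q1 := fun gneg => forall j, (j < nn)%N -> gneg j = g_neg delta np nn sp sn j)).
  apply: (sat_conseq (@sat_tabulate _ _ _ _ (fun j v => v = g_neg delta np nn sp sn j) 1%N _)); [ | by [] | by []].
  move=> j jn; apply: sat_step => //.
  by rewrite Hgn // /g_neg -mulr_suml mulrC.
move=> gneg Hgneg; cbv beta.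
by apply: sat_ret; split.
Qed.

Lemma total_bound np nn : (0 < np)%N ->
  (total np nn <= 100 * maxn ((np + nn) * trunc_log 2 (np + nn)) (np ^ 2))%N.
Proof.
move=> np0; rewrite /total /CRS.
have : (np + nn = np + nn)%N by [].
move: {2 4 5 6 7}(np + nn)%N => n nE.
set M := maxn _ _.
have Mt : (n * trunc_log 2 n <= M)%N by rewrite leq_maxl.
have Mp : (np * np <= M)%N by rewrite mulnn leq_maxr.
have ul : (up_log 2 n <= trunc_log 2 n + 1)%N.
  case: (ltnP 1 n) => n1.
    rewrite up_log_trunc_log //; have := leq_trunc_log 2 (leq_pred n); lia.
  have : up_log 2 n == 0%N by rewrite up_log_eq0 n1 orbT.
  by move/eqP ->.
have nM : (n <= M)%N.
  case: (ltnP 1 n) => n1.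
    have : (0 < trunc_log 2 n)%N by rewrite trunc_log_gt0 n1.
    move: Mt; move: (trunc_log 2 n) => t; nia.
  nia.
have nu : (n * up_log 2 n <= M + M)%N.
  have : (n * up_log 2 n <= n * (trunc_log 2 n + 1))%N by rewrite leq_mul2l ul orbT.
  nia.
move: Mt Mp nM nu; move: M (up_log 2 n) (trunc_log 2 n) => M u t.
nia.
Qed.

Theorem theorem2 :
  exists Cst : nat,
  forall (R : realFieldType) (delta : R) (np nn : nat) (sp sn iou : nat -> R),
    (0 < np)%N -> 0 <= delta ->
    (forall i, (i < np)%N -> 0 <= iou i <= 1) ->
    forall rs : bool,
    let res := bucketed rs delta np nn sp sn iou in
    (forall i, (i < np)%N ->
       res.1.1 i = (if rs then gRS_pos delta np nn sp sn iou i
                    else gAP_pos delta np nn sp sn i)) /\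
    (forall j, (j < nn)%N -> res.1.2 j = g_neg delta np nn sp sn j) /\
    (res.2 <= Cst * maxn ((np + nn) * trunc_log 2 (np + nn)) (np ^ 2))%N.
Proof.
exists 100%N => R delta np nn sp sn iou np0 _ _ rs res.
have [[H1 H2] Hc] := main_sat rs delta np nn sp sn iou.
split; [exact: H1 | split; [exact: H2 |]].
exact: leq_trans Hc (total_bound nn np0).
Qed.
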